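(* Let $\nu\ge1$ and let $Z_1,\dots,Z_N$ be nonnegative random variables for some integer $N\ge2$. Suppose there exist constants $\Theta_1>0$, $\Theta_2>0$ such that $\mathbb EZ_i^{2p}\le[p^{\nu p}+\Theta_2^{\nu p}]\Theta_1^{2p}$ for all integers $p\ge1$ and all $i\in\{1,\dots,N\}$. Then for all real $p\ge1$, $$\mathbb E\max_{i\in\{1,\dots,N\}}Z_i^{2p}\le\big(p^{\nu p}+[\ln N+\Theta_2]^{\nu p}\big)\big((16e\nu)^\nu\Theta_1^2\big)^p.$$ *)

(* Defs.v *)
From HB Require Import structures.
From mathcomp Require Import all_boot all_order all_algebra.
From mathcomp Require Import all_classical all_reals all_analysis.
Set Implicit Arguments. Unset Strict Implicit. Unset Printing Implicit Defensive.

(* Main.v *)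
Require Import Defs.
From HB Require Import structures.
From mathcomp Require Import all_boot all_order all_algebra.
From mathcomp Require Import all_classical all_reals all_analysis.
From mathcomp Require Import ring lra.
Import Order.TTheory GRing.Theory Num.Theory.
Local Open Scope ring_scope.

Lemma pow_sum2 (R : realType) (a b k : R) : 0 <= a -> 0 <= b -> 0 <= k ->
  a `^ k + b `^ k <= 2 * (a + b) `^ k.
Proof.
move=> a0 b0 k0.
have ha : a `^ k <= (a + b) `^ k.
  by apply: ge0_ler_powR => //; rewrite ?nnegrE //; [lra|lra].
have hb : b `^ k <= (a + b) `^ k.
  by apply: ge0_ler_powR => //; rewrite ?nnegrE //; [lra|lra].
lra.
Qed.

Lemma pow_add_le (R : realType) (a b k : R) : 0 <= a -> 0 <= b -> 0 <= k ->
  (a + b) `^ k <= 2 `^ k * (a `^ k + b `^ k).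
Proof.
move=> a0 b0 k0.
have h2 : 0 <= 2 `^ k :> R by apply: powR_ge0.
have e2 : (0:R) <= 2 by lra.
have ha := powR_ge0 a k; have hb := powR_ge0 b k.
have [ab|ba] := leP a b.
  have : (a + b) `^ k <= (2 * b) `^ k.
    by apply: ge0_ler_powR => //; rewrite ?nnegrE //; lra.
  rewrite powRM //. move=> h; apply: (le_trans h).
  by rewrite ler_wpM2l // lerDr.
have : (a + b) `^ k <= (2 * a) `^ k.
  by apply: ge0_ler_powR => //; rewrite ?nnegrE //; lra.
rewrite powRM //. move=> h; apply: (le_trans h).
by rewrite ler_wpM2l // lerDl.
Qed.

Lemma tangent_pow (R : realType) (t s : R) : 0 <= t -> 0 < s -> s < 1 ->
  t `^ s <= s * t + (1 - s).
Proof.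
move=> t0 s0 s1.
have := @conjugate_powR R (t `^ s) 1 (s^-1) ((1 - s)^-1) (powR_ge0 _ _) ler01.
rewrite !invr_gt0 s0 subr_gt0 s1 !invrK => /(_ isT isT).
have -> : s + (1 - s) = 1 by lra.
move=> /(_ erefl). rewrite mulr1 -powRrM mulfV ?gt_eqF // powRr1 //.
by rewrite powR1 mul1r mulrC.
Qed.

Lemma base_ineq (R : realType) (nu : R) : 1 <= nu ->
  expR 1 * 2 * 2 `^ nu * 2 `^ nu <= (16 * expR 1 * nu) `^ nu.
Proof.
move=> nu1.
have E1 : 1 < expR 1 :> R by rewrite expR_gt1.
have -> : 16 * expR 1 * nu = (2 * 2) * (4 * expR 1 * nu).
  by move: (expR 1) => e; ring.
rewrite powRM; [|lra|nra].
rewrite powRM; [|lra|lra].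
set A := 2 `^ nu.
have A0 : 0 <= A by apply: powR_ge0.
have hY : 4 * expR 1 * nu <= (4 * expR 1 * nu) `^ nu by apply: le1r_powR; nra.
have h : expR 1 * 2 <= (4 * expR 1 * nu) `^ nu by nra.
have AA : 0 <= A * A by nra.
have r : forall e a : R, e * 2 * a * a = (a * a) * (e * 2) by move=> e a; ring.
rewrite r.
by apply: ler_wpM2l.
Qed.

Lemma main_real (R : realType) (N q : nat) (nu Theta1 Theta2 p : R) :
 (2 <= N)%N -> 1 <= nu -> 0 < Theta1 -> 0 < Theta2 -> 1 <= p ->
 ln (N%:R : R) < q%:R -> p < q%:R -> q%:R <= p + ln (N%:R : R) + 1 ->
 (N%:R * (2 * (q%:R + Theta2) `^ (nu * q%:R) * Theta1 `^ (2 * q%:R))) `^ (p / q%:R)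
 <= (p `^ (nu * p) + (ln N%:R + Theta2) `^ (nu * p))
     * ((16 * expR 1 * nu) `^ nu * Theta1 ^+ 2) `^ p.
Proof.
move=> N2 nu1 T1 T2 p1 lnq pq qle.
set Q := q%:R in lnq pq qle *.
set s := p / Q.
set L := ln N%:R + Theta2.
set X := p `^ (nu * p) + L `^ (nu * p).
have Q0 : 0 < Q by lra.
have lnN0 : 0 < ln (N%:R : R) by apply: ln_gt0; rewrite ltr1n.
have NR0 : 0 < N%:R :> R by rewrite ltr0n; apply: leq_trans N2.
have X0 : 0 <= X by apply: addr_ge0; apply: powR_ge0.
have s0 : 0 < s by rewrite /s divr_gt0 //; lra.
have s1 : s < 1 by rewrite /s ltr_pdivrMr // mul1r.
rewrite powRM; [|lra|by apply: mulr_ge0; [apply: mulr_ge0; [lra|apply: powR_ge0]|apply: powR_ge0]].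
rewrite powRM; [|by apply: mulr_ge0; [lra|apply: powR_ge0]|by apply: powR_ge0].
rewrite powRM; [|lra|by apply: powR_ge0].
rewrite -!powRrM.
have e1 : nu * Q * s = nu * p by rewrite /s; field; lra.
have e2 : 2 * Q * s = 2 * p by rewrite /s; field; lra.
rewrite e1 e2.
have hN : N%:R `^ s <= expR p.
  rewrite /powR (gt_eqF NR0) ler_expR /s mulrAC ler_pdivrMr //; nra.
have h2 : 2 `^ s <= 2 `^ p by apply: ler_powR; lra.
have hq : (Q + Theta2) `^ (nu * p) <= 2 `^ (nu * p) * (2 `^ (nu * p) * X).
  have np0 : 0 <= nu * p by nra.
  apply: (@le_trans _ _ ((2 * (p + L)) `^ (nu * p))).
    by apply: ge0_ler_powR => //; rewrite ?nnegrE /L; lra.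
  rewrite powRM; [|lra|rewrite /L; lra].
  apply: ler_wpM2l; first exact: powR_ge0.
  by apply: pow_add_le => //; rewrite /L; lra.
set P2 := Theta1 `^ (2 * p).
have P20 : 0 <= P2 by apply: powR_ge0.
have B0 := powR_ge0 (Q + Theta2) (nu * p).
have S0 := powR_ge0 2 s.
apply: (@le_trans _ _ (expR p * ((2 `^ p * (2 `^ (nu * p) * (2 `^ (nu * p) * X))) * P2))).
  apply: ler_pM => //.
    by apply: mulr_ge0 => //; apply: mulr_ge0.
  apply: ler_pM => //; first exact: mulr_ge0.
  by apply: ler_pM.
have RHSe : ((16 * expR 1 * nu) `^ nu * Theta1 ^+ 2) `^ p
    = ((16 * expR 1 * nu) `^ nu) `^ p * P2.
  rewrite powRM; [|by apply: powR_ge0|by rewrite exprn_ge0 // ltW].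
  by rewrite -(@powR_mulrn _ Theta1 2 (ltW T1)) /P2 powRrM.
rewrite RHSe.
have eE : expR p = expR 1 `^ p by rewrite /powR gt_eqF ?expR_gt0 // expRK mulr1.
have e22 : 2 `^ (nu * p) = (2 `^ nu) `^ p by rewrite powRrM.
rewrite eE e22.
set A := 2 `^ nu.
set D := (16 * expR 1 * nu) `^ nu.
have A0 : 0 <= A by apply: powR_ge0.
have r1 : forall a b c x y : R, a * (b * (c * (c * x)) * y) = (a * b * c * c) * (x * y).
  by move=> *; ring.
have r2 : forall d x y : R, x * (d * y) = d * (x * y) by move=> *; ring.
rewrite r1 r2.
apply: (ler_wpM2l X0); apply: (ler_wpM2r P20).
have E0 : 0 <= expR 1 :> R := ltW (expR_gt0 1).
have t0 : 0 <= 2 :> R := ler0n _ 2.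
rewrite -(powRM _ E0 t0) -(powRM _ (mulr_ge0 E0 t0) A0).
rewrite -(powRM _ (mulr_ge0 (mulr_ge0 E0 t0) A0) A0).
apply: ge0_ler_powR; [exact: le_trans ler01 p1| |exact: powR_ge0|exact: base_ineq].
by rewrite nnegrE; apply: mulr_ge0 => //; apply: mulr_ge0 => //; apply: mulr_ge0.
Qed.

Lemma mbig (d : measure_display) (T : measurableType d) (R : realType)
  (op : R -> R -> R) (x0 : R) (I : Type) (F : I -> T -> R) :
  (forall f g : T -> R, measurable_fun setT f -> measurable_fun setT g ->
     measurable_fun setT (fun x => op (f x) (g x))) ->
  (forall i, measurable_fun setT (F i)) ->
  forall s : seq I, measurable_fun setT (fun x => \big[op/x0]_(i <- s) F i x).
Proof.
move=> hop mF; elim => [|i s IH].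
  under eq_fun do rewrite big_nil. exact: measurable_cst.
under eq_fun do rewrite big_cons.
exact: hop.
Qed.

Local Open Scope ereal_scope.

Theorem corollaryB5 (d : measure_display) (T : measurableType d) (R : realType)
  (P : probability T R) (N : nat) (Z : 'I_N -> T -> R)
  (nu Theta1 Theta2 : R) :
  (2 <= N)%N ->
  (1 <= nu)%R ->
  (0 < Theta1)%R -> (0 < Theta2)%R ->
  (forall i, measurable_fun setT (Z i)) ->
  (forall i x, (0 <= Z i x)%R) ->
  (forall (p : nat) (i : 'I_N), (1 <= p)%N ->
     \int[P]_x (((Z i x) `^ (2 * p%:R))%:E)
       <= (((p%:R `^ (nu * p%:R) + Theta2 `^ (nu * p%:R)) * Theta1 `^ (2 * p%:R))%R)%:E) ->
  forall p : R, (1 <= p)%R ->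
    \int[P]_x ((\big[Num.max/0%R]_(i < N) ((Z i x) `^ (2 * p)))%:E)
      <= (((p `^ (nu * p) + (ln N%:R + Theta2) `^ (nu * p))
           * ((16 * expR 1 * nu) `^ nu * Theta1 ^+ 2) `^ p)%R)%:E.
Proof.
move=> N2 nu1 T1 T2 mZ Z0 hyp p p1.
have lnN0 : (0 < ln (N%:R : R))%R by apply: ln_gt0; rewrite ltr1n.
set m := (p + ln (N%:R : R))%R.
have m0 : (0 <= m)%R by rewrite /m; lra.
set q := (Num.truncn m).+1.
have mq : (m < q%:R)%R := truncnS_gt m.
have qle : (q%:R <= m + 1)%R by rewrite /q -natr1 lerD2r truncn_le.
have lnq : (ln (N%:R : R) < q%:R)%R by rewrite /m in mq; lra.
have pq : (p < q%:R)%R by rewrite /m in mq; lra.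
have qle' : (q%:R <= p + ln (N%:R : R) + 1)%R by [].
have q1 : (1 <= q)%N by [].
have MR := @main_real R N q nu Theta1 Theta2 p N2 nu1 T1 T2 p1 lnq pq qle'.
move: MR hyp.
set Q : R := q%:R.
move=> MR hyp.
have Q0 : (0 < Q)%R by rewrite /Q; lra.
set s := (p / Q)%R.
have s0 : (0 < s)%R by rewrite /s divr_gt0 //; lra.
have s1 : (s < 1)%R by rewrite /s ltr_pdivrMr // mul1r.
set b := (2 * (Q + Theta2) `^ (nu * Q) * Theta1 `^ (2 * Q))%R.
set M := (N%:R * b)%R.
have b0 : (0 < b)%R.
  rewrite /b mulr_gt0 ?powR_gt0 //; apply: mulr_gt0; [lra|apply: powR_gt0; lra].
have NR0 : (0 < N%:R :> R)%R by rewrite ltr0n; apply: leq_trans N2.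
have M0 : (0 < M)%R by rewrite /M mulr_gt0.
have hb : forall i, \int[P]_x ((Z i x `^ (2 * Q))%:E) <= b%:E.
  move=> i; apply: le_trans (hyp q i q1) _; rewrite lee_fin /b.
  apply: ler_wpM2r; first exact: powR_ge0.
  apply: pow_sum2; rewrite /Q; [lra|lra|nra].
pose S x := (\sum_(i < N) Z i x `^ (2 * Q))%R.
pose f x := (\big[Num.max/0%R]_(i < N) (Z i x `^ (2 * p)))%R.
have mS : measurable_fun setT S.
  apply: mbig => [g h mg mh|i]; first exact: measurable_realfun.measurable_funD.
  exact: (measurableT_comp (measurable_realfun.measurable_powR _) (mZ i)).
have mf : measurable_fun setT f.
  apply: mbig => [g h mg mh|i]; first exact: measurable_realfun.measurable_maxr.
  exact: (measurableT_comp (measurable_realfun.measurable_powR _) (mZ i)).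
have S0 : forall x, (0 <= S x)%R by move=> x; apply: sumr_ge0 => i _; exact: powR_ge0.
have f0 : forall x, (0 <= f x)%R.
  move=> x; apply: (big_ind (fun y => 0 <= y)%R) => //.
    by move=> a c ha hc; rewrite le_max ha.
  by move=> i _; exact: powR_ge0.
set c1 := (s * M `^ s / M)%R.
set c0 := ((1 - s) * M `^ s)%R.
have c10 : (0 <= c1)%R by rewrite /c1 divr_ge0 ?(ltW M0) // mulr_ge0 ?powR_ge0 // ltW.
have c00 : (0 <= c0)%R by rewrite /c0 mulr_ge0 ?powR_ge0 //; lra.
have pt : forall x, (f x <= c1 * S x + c0)%R.
  move=> x; apply: (@le_trans _ _ (S x `^ s)%R).
    apply: bigmax_le; first exact: powR_ge0.
    move=> i _.
    have -> : (Z i x `^ (2 * p) = (Z i x `^ (2 * Q)) `^ s)%R.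
      by rewrite -powRrM /s; congr powR; field; lra.
    apply: ge0_ler_powR; [exact: ltW|exact: powR_ge0|exact: S0|].
    by rewrite /S (bigD1 i) //= lerDl; apply: sumr_ge0 => j _; exact: powR_ge0.
  have t0 : (0 <= S x / M)%R by rewrite divr_ge0 // ltW.
  have h := @tangent_pow R _ _ t0 s0 s1.
  rewrite -{1}(divfK (lt0r_neq0 M0) (S x)) powRM //; last exact: ltW.
  apply: le_trans (ler_wpM2r (powR_ge0 M s) h) _.
  rewrite le_eqVlt; apply/orP; left; apply/eqP.
  rewrite /c1 /c0; move: (M `^ s)%R => Ms; field; exact: lt0r_neq0.
apply: (@le_trans _ _ (\int[P]_x ((c1 * S x + c0)%R%:E))).
  apply: ge0_le_integral => //.
  - by move=> x _; rewrite lee_fin; exact: (f0 x).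
  - by apply/measurable_realfun.measurable_EFinP; exact: mf.
  - apply/measurable_realfun.measurable_EFinP.
    apply: measurable_realfun.measurable_funD; last exact: measurable_cst.
    exact: measurable_realfun.measurable_funM (measurable_cst _) mS.
  - by move=> x _; rewrite lee_fin; exact: (pt x).
have eq1 : \int[P]_x ((c1 * S x + c0)%R%:E)
    = c1%:E * \int[P]_x ((S x)%:E) + c0%:E.
  under eq_integral do rewrite EFinD EFinM.
  rewrite ge0_integralD //.
  - rewrite ge0_integralZl_EFin //.
    + have hc := integral_cst P measurableT c0%:E.
      congr (_ + _); rewrite hc -[RHS]mule1; congr (_ * _).
      exact: probability_setT.
    + by move=> x _; rewrite lee_fin.
    + exact/measurable_realfun.measurable_EFinP.
  all: try by [move=> x _; rewrite -?EFinM lee_fin ?mulr_ge0].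
  all: try exact: measurable_cst.
  all: try apply/measurable_realfun.measurable_EFinP.
  all: first [exact: measurable_realfun.measurable_funM (measurable_cst _) mS
             | exact: (measurableT_comp (mulrl_measurable c1) mS)
             | idtac ].
  1: by move=> x _; rewrite -EFinM lee_fin; exact: mulr_ge0 c10 (S0 x).
have eq2 : \int[P]_x ((S x)%:E) = \sum_(i < N) \int[P]_x ((Z i x `^ (2 * Q))%:E).
  under eq_integral do rewrite /S -sumEFin.
  apply: ge0_integral_sum => //.
  - by move=> i; apply/measurable_realfun.measurable_EFinP; exact: (measurableT_comp (measurable_realfun.measurable_powR _) (mZ i)).
  - by move=> i x _; rewrite lee_fin powR_ge0.
have eq3 : \sum_(i < N) \int[P]_x ((Z i x `^ (2 * Q))%:E) <= M%:E.
  apply: le_trans (lee_sum _ (fun i _ => hb i)) _.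
  by rewrite sumEFin sumr_const card_ord /M mulr_natl.
rewrite eq1 eq2.
apply: (@le_trans _ _ (c1%:E * M%:E + c0%:E)).
  by apply: leeD => //; apply: lee_wpmul2l => //; rewrite lee_fin.
rewrite -EFinM -EFinD lee_fin.
have -> : (c1 * M + c0 = M `^ s)%R.
  by rewrite /c1 /c0; move: (M `^ s)%R => Ms; field; exact: lt0r_neq0.
exact: MR.
Qed.
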